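(* Let $G=G_1\cup G_2$, where $G_1\cap G_2$ is a clique. If both $G_1$ and $G_2$ have clique-based $\infty$-admissibility at most $t$, then $G$ has clique-based $\infty$-admissibility at most $t$ as well.
   Context: All graphs are finite and simple. Given an ordering $v_1,\ldots,v_n$ of $V(G)$, the $\infty$-backconnectivity of $v_k$ is the maximum number of paths (of any length) from $v_k$ to $\{v_1,\ldots,v_{k-1}\}$ that pairwise intersect only in $v_k$; the $\infty$-admissibility of the ordering is the maximum $\infty$-backconnectivity over its vertices. For $X\subseteq V(G)$, $G$ has $X$-based $\infty$-admissibility at most $t$ if there is an ordering $v_1,\ldots,v_n$ of $V(G)$ with $\infty$-admissibility at most $t$ and $X=\{v_1,\ldots,v_{|X|}\}$. $G$ has clique-based $\infty$-admissibility at most $t$ if it has $X$-based $\infty$-admissibility at most $t$ for every $X\subseteq V(G)$ inducing a clique in $G$. *)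

(* Defs.v *)
From mathcomp Require Import all_boot.
Set Implicit Arguments. Unset Strict Implicit. Unset Printing Implicit Defensive.

Section Graphs.
Variable T : finType.

Definition simple_graph (V : {set T}) (E : rel T) : Prop :=
  [/\ symmetric E, irreflexive E & forall x y, E x y -> (x \in V) && (y \in V)].

(* p is the list of vertices after v of a path v, p_1, ..., p_m from v to the
   set S: the path is simple, consecutive vertices are adjacent, it ends in S,
   and no earlier vertex (v included) lies in S. *)
Definition path_to (E : rel T) (S : pred T) (v : T) (p : seq T) : bool :=
  [&& uniq (v :: p), path E v p, p != [::], last v p \in S
    & all (fun x => x \notin S) (belast v p)].

(* infinity-backconnectivity of v in the ordering s is at most t: every family
   of paths from v to the set of vertices preceding v in s that pairwise
   intersect only in v has at most t members. *)
Definition backconn_le (E : rel T) (s : seq T) (v : T) (t : nat) : Prop :=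
  forall P : seq (seq T),
    all (path_to E (mem (take (index v s) s)) v) P ->
    pairwise (fun p q => ~~ has (mem q) p) P ->
    size P <= t.

Definition ordering (V : {set T}) (s : seq T) : Prop := uniq s /\ s =i V.

Definition adm_le (E : rel T) (s : seq T) (t : nat) : Prop :=
  forall v, v \in s -> backconn_le E s v t.

Definition X_based_adm_le (V : {set T}) (E : rel T) (X : {set T}) (t : nat) : Prop :=
  exists s, [/\ ordering V s, adm_le E s t & [set x in take #|X| s] = X].

Definition is_clique (E : rel T) (X : {set T}) : Prop :=
  forall x y, x \in X -> y \in X -> x != y -> E x y.

Definition clique_based_adm_le (V : {set T}) (E : rel T) (t : nat) : Prop :=
  forall X : {set T}, X \subset V -> is_clique E X -> X_based_adm_le V E X t.

End Graphs.

(* Main.v *)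
Require Import Defs.
From mathcomp Require Import all_boot.
Set Implicit Arguments. Unset Strict Implicit. Unset Printing Implicit Defensive.

Section Aux.
Variable T : finType.
Variables (V1 V2 : {set T}) (E1 E2 E : rel T).
Hypothesis G1 : simple_graph V1 E1.
Hypothesis G2 : simple_graph V2 E2.
Hypothesis HC : forall x y, x \in V1 :&: V2 -> y \in V1 :&: V2 -> x != y -> E1 x y && E2 x y.
Hypothesis HE : forall x y, E x y = E1 x y || E2 x y.

Lemma E1V x y : E1 x y -> (x \in V1) && (y \in V1).
Proof. by case: G1 => _ _; apply. Qed.
Lemma E2V x y : E2 x y -> (x \in V2) && (y \in V2).
Proof. by case: G2 => _ _; apply. Qed.

Lemma filter_path p : forall x c,
  uniq (c :: p) ->
  path E x p ->
  (x = c /\ x \in V1) \/ (x \in V2 /\ x \notin V1 /\ c \in V1 :&: V2) ->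
  path E1 c (filter (mem V1) p).
Proof.
elim: p => [|y p IH] x c //= /andP[cnp up] /andP[Exy pp] Hx.
move: cnp; rewrite in_cons negb_or => /andP[cy cnp].
case yV1: (y \in V1) => /=.
  apply/andP; split; last by apply: (IH y y) => //; left.
  move: Exy; rewrite HE; case: Hx => [[-> xV1]|[xV2 [xV1 cC]]].
    case/orP => // /E2V /andP[xV2 yV2].
    have := @HC c y; rewrite !inE xV1 yV1 xV2 yV2 cy => /(_ isT isT isT).
    by case/andP.
  case/orP => [/E1V /andP[]|/E2V /andP[_ yV2]]; first by rewrite (negbTE xV1).
  have := @HC c y cC; rewrite !inE yV1 yV2 cy => /(_ isT isT).
  by case/andP.
move: Exy; rewrite HE => /orP[/E1V /andP[_]|/E2V /andP[xV2 yV2]]; first by rewrite yV1.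
apply: (IH y c) => //=; first by rewrite cnp; case/andP: up.
right; split=> //; split; first by rewrite yV1.
case: Hx => [[xc xV1]|[_ [_ //]]].
by rewrite -xc inE xV1 xV2.
Qed.

Lemma path_E2 p : forall x, all (fun z => z \notin V1) (belast x p) ->
  path E x p -> path E2 x p.
Proof.
elim: p => [|y p IH] x //= /andP[xV1 al] /andP[Exy pp].
rewrite IH // andbT; move: Exy; rewrite HE => /orP[/E1V /andP[]|//].
by rewrite (negbTE xV1).
Qed.

Lemma last_V2 x p : path E2 x p -> p != [::] -> last x p \in V2.
Proof.
case/lastP: p => [|q z] //; rewrite rcons_path last_rcons => /andP[_ /E2V].
by case/andP.
Qed.

Lemma take_index_cat (v : T) a b : v \notin a ->
  take (index v (a ++ b)) (a ++ b) = a ++ take (index v b) b.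
Proof.
move=> va; rewrite index_cat (negbTE va) take_cat ltnNge leq_addr /=.
by rewrite addKn.
Qed.

Lemma pt1 (l : seq T) v p : {subset l <= V1} -> v \in V1 ->
  path_to E (mem l) v p -> path_to E1 (mem l) v (filter (mem V1) p).
Proof.
move=> lV1 vV1; case/lastP: p => [|q z]; first by case/and5P.
rewrite /path_to last_rcons belast_rcons => /and5P[u pa _ zl al].
have zV1 : z \in V1 by apply: lV1.
have fr : filter (mem V1) (rcons q z) = rcons (filter (mem V1) q) z.
  by rewrite filter_rcons /= zV1.
rewrite fr last_rcons belast_rcons zl.
apply/and5P; split=> //.
- by have := filter_uniq (mem V1) u; rewrite /= vV1 fr.
- by rewrite -fr; apply: (filter_path (x := v)) => //; left.
- by case: (filter _ q).
move: al => /= /andP[-> /allP al]; apply/allP => y.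
by rewrite mem_filter => /andP[_ /al].
Qed.

Lemma pt2 (S S2 : pred T) v p : {subset S2 <= S} -> {subset V1 <= S} ->
  (forall y, y \in S -> y \in V2 -> y \in S2) ->
  path_to E S v p -> path_to E2 S2 v p.
Proof.
move=> S2S V1S SV2 /and5P[u pa ne zl al].
have al1 : all (fun z => z \notin V1) (belast v p).
  by apply: sub_all al => y; apply: contra; apply: V1S.
have pa2 := path_E2 al1 pa.
apply/and5P; split=> //.
- by apply: SV2 => //; apply: last_V2.
by apply: sub_all al => y; apply: contra; apply: S2S.
Qed.

Lemma mainl t (X V : {set T}) : X \subset V1 -> V = V1 :|: V2 ->
  X_based_adm_le V1 E1 X t -> X_based_adm_le V2 E2 (V1 :&: V2) t ->
  X_based_adm_le V E X t.
Proof.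
move=> XV1 -> [s1 [[u1 e1] a1 t1]] [s2 [[u2 e2] a2 t2]].
set k := #|V1 :&: V2|; set d := drop k s2.
have tkC y : (y \in take k s2) = (y \in V1 :&: V2) by rewrite -[in RHS]t2 inE.
have dis : ~~ has (mem (take k s2)) d.
  by move: u2; rewrite -{1}(cat_take_drop k s2) cat_uniq => /and3P[].
have dP y : (y \in d) = (y \in V2) && (y \notin V1).
  case yd: (y \in d).
    have yV2 : y \in V2 by rewrite -e2; apply: mem_drop yd.
    rewrite yV2 andTb; apply/esym/negP => yV1.
    by move/hasPn: dis => /(_ y yd); rewrite /= tkC inE yV1 yV2.
  apply/esym/negP => /andP[yV2 yV1].
  have : y \in s2 by rewrite e2.
  rewrite -(cat_take_drop k s2) mem_cat -/d yd orbF tkC inE.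
  by rewrite (negbTE yV1).
exists (s1 ++ d); split.
- split.
    rewrite cat_uniq u1 (drop_uniq k u2) andbT /=; apply/hasPn => y.
    by rewrite dP e1 => /andP[_].
  move=> y; rewrite mem_cat dP e1 !inE.
  by case: (y \in V1); case: (y \in V2).
- move=> v; rewrite mem_cat => /orP[vs1|vd].
    rewrite /backconn_le index_cat vs1 takel_cat; last by rewrite index_size.
    move=> P HP Hpw.
    have := a1 v vs1 (map (filter (mem V1)) P); rewrite size_map; apply.
      apply/allP => q /mapP[p pP ->]; apply: pt1.
      + by move=> y /mem_take; rewrite e1.
      + by rewrite -e1.
      + by apply: (allP HP).
    rewrite pairwise_map; apply: sub_pairwise Hpw => p q; apply: contra.
    case/hasP=> x; rewrite /= !mem_filter => /andP[_ xp] /andP[_ xq].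
    by apply/hasP; exists x.
  have vs1 : v \notin s1 by rewrite e1; move: vd; rewrite dP => /andP[].
  have vtk : v \notin take k s2 by apply: contra (hasPn dis v vd).
  rewrite /backconn_le take_index_cat // => P HP Hpw.
  have := a2 v (mem_drop vd).
  rewrite /backconn_le -[in take _ s2](cat_take_drop k s2).
  rewrite take_index_cat // -/d.
  move/(_ P); apply=> //.
  apply: sub_all HP => p; apply: pt2.
  + move=> y; rewrite !mem_cat => /orP[yt|->]; last by rewrite orbT.
    by move: yt; rewrite tkC inE e1 => /andP[->].
  + by move=> y; rewrite mem_cat -e1 => ->.
  + move=> y; rewrite !mem_cat => /orP[ys1 yV2|->]; last by rewrite orbT.
    by rewrite tkC inE -e1 ys1 yV2.
- rewrite takel_cat ?t1 //.
  have -> : size s1 = #|V1|.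
    by rewrite -(card_uniqP u1); apply: eq_card.
  by apply: subset_leq_card.
Qed.

End Aux.

Theorem lemma25 (T : finType) (V1 V2 : {set T}) (E1 E2 : rel T) (t : nat) :
  simple_graph V1 E1 -> simple_graph V2 E2 ->
  (* G1 ∩ G2 = (V1 :&: V2, E1 ∩ E2) is a clique *)
  (forall x y, x \in V1 :&: V2 -> y \in V1 :&: V2 -> x != y -> E1 x y && E2 x y) ->
  clique_based_adm_le V1 E1 t -> clique_based_adm_le V2 E2 t ->
  clique_based_adm_le (V1 :|: V2) (fun x y => E1 x y || E2 x y) t.
Proof.
move=> G1 G2 HC C1 C2 X XV Xcl.
have HC' : forall x y, x \in V2 :&: V1 -> y \in V2 :&: V1 -> x != y -> E2 x y && E1 x y.
  by rewrite setIC => x y xC yC xy; rewrite andbC; apply: HC.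
case: (boolP (X \subset V1)) => XV1; have XV1b := XV1.
  apply: (mainl G1 G2 HC (E := fun x y => E1 x y || E2 x y) (fun _ _ => erefl) XV1 (erefl _)).
    refine (C1 X XV1b _) => x y xX yX xy; case/orP: (Xcl x y xX yX xy) => // /(E2V G2) /andP[xV2 yV2].
    have xC : x \in V1 :&: V2 by rewrite inE (subsetP XV1b x xX) xV2.
    have yC : y \in V1 :&: V2 by rewrite inE (subsetP XV1b y yX) yV2.
    by case/andP: (HC _ _ xC yC xy).
  apply: C2; first exact: subsetIr.
  by move=> x y xC yC xy; case/andP: (HC _ _ xC yC xy).
have XV2b : X \subset V2.
  case/subsetPn: XV1 => a aX aV1; apply/subsetP => b bX.
  have := subsetP XV a aX; rewrite inE (negbTE aV1) /= => aV2.
  case: (eqVneq a b) => [<-//|ab].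
  case/orP: (Xcl a b aX bX ab) => [/(E1V G1) /andP[]|/(E2V G2) /andP[]//].
  by rewrite (negbTE aV1).
have XV2 := XV2b.
apply: (mainl G2 G1 HC' (E := fun x y => E1 x y || E2 x y) _ XV2b (setUC _ _)).
- by move=> x y; rewrite orbC.
- refine (C2 X XV2 _) => x y xX yX xy; case/orP: (Xcl x y xX yX xy) => // /(E1V G1) /andP[xV1 yV1].
  have xC : x \in V2 :&: V1 by rewrite inE (subsetP XV2 x xX) xV1.
  have yC : y \in V2 :&: V1 by rewrite inE (subsetP XV2 y yX) yV1.
  by case/andP: (HC' _ _ xC yC xy).
apply: C1; first exact: subsetIr.
by move=> x y xC yC xy; case/andP: (HC' _ _ xC yC xy).
Qed.
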